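(* Let $(\mathcal G,\lambda)$ be a small morphism-colored groupoid satisfying the inverse-compatibility condition. Then the relation $\overset{0}{\sim}$ on $I_0$ is an equivalence relation.
   Context: A morphism-colored category is a pair $(\mathcal C,\lambda)$ where $\mathcal C$ is a category and $\lambda$ assigns to each morphism $f$ a color $\lambda(f)$, such that: whenever $g,f_1,f_2$ with $(f_1,f_2)$ composable satisfy $\lambda(g)=\lambda(f_1\circ f_2)$, there exist composable $g_1,g_2$ with $g=g_1\circ g_2$, $\lambda(g_1)=\lambda(f_1)$, $\lambda(g_2)=\lambda(f_2)$. It is a morphism-colored groupoid if $\mathcal C$ is a groupoid, and small if $\mathcal C$ is small and $\lambda$ is a map into a set. Inverse-compatibility: $\lambda(f)=\lambda(g)$ implies $\lambda(f^{-1})=\lambda(g^{-1})$. $I_1=\lambda(\mathrm{Mor}(\mathcal G))$, $\lambda_1$ the corestriction of $\lambda$ to $I_1$; $I_0=\{\lambda(\mathrm{id}_x):x\in\mathrm{Obj}(\mathcal G)\}$, $\lambda_0(x)=\lambda(\mathrm{id}_x)$. The equivalence relation $\overset{1}{\sim}$ on $I_1$: $\lambda(f_1\circ\cdots\circ f_l)\overset{1}{\sim}\lambda(g_1\circ\cdots\circ g_l)$ for every $l\ge1$ and all composable sequences with $\lambda(f_i)=\lambda(g_i)$ for all $i$ (no other pairs); $s_1:I_1\to\bar I_1$ the quotient map. The relation $\overset{0}{\sim}$ on $I_0$: declare $\lambda_0(\mathrm{source}(f))\overset{0}{\sim}\lambda_0(\mathrm{source}(g))$ for all $f,g\in\mathrm{Mor}(\mathcal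 G)$ with $(s_1\circ\lambda_1)(f)=(s_1\circ\lambda_1)(g)$ (no other pairs). *)

(* Defs.v *)
From Stdlib Require Import List Relations.
Import ListNotations.
Set Implicit Arguments.
Unset Strict Implicit.


(** A small groupoid: a type of objects, a type of morphisms, source/target,
    identities, a composition [comp f g] (= f ∘ g, meaningful when
    [src f = tgt g]) and inverses, with the usual axioms. *)
Record Groupoid := {
  Obj : Type;
  Mor : Type;
  src : Mor -> Obj;
  tgt : Mor -> Obj;
  idm : Obj -> Mor;
  comp : Mor -> Mor -> Mor;
  inv : Mor -> Mor;
  src_id : forall x, src (idm x) = x;
  tgt_id : forall x, tgt (idm x) = x;
  src_comp : forall f g, src f = tgt g -> src (comp f g) = src g;
  tgt_comp : forall f g, src f = tgt g -> tgt (comp f g) = tgt f;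
  comp_id_l : forall f, comp (idm (tgt f)) f = f;
  comp_id_r : forall f, comp f (idm (src f)) = f;
  comp_assoc : forall f g h, src f = tgt g -> src g = tgt h ->
      comp f (comp g h) = comp (comp f g) h;
  src_inv : forall f, src (inv f) = tgt f;
  tgt_inv : forall f, tgt (inv f) = src f;
  inv_l : forall f, comp (inv f) f = idm (src f);
  inv_r : forall f, comp f (inv f) = idm (tgt f)
}.
Arguments src {g0} _. Arguments tgt {g0} _. Arguments idm {g0} _.
Arguments comp {g0} _. Arguments inv {g0} _.

Section Colored.
Variables (G : Groupoid) (I : Type) (lam : Mor G -> I).

Definition morphism_colored : Prop :=
  forall g f1 f2 : Mor G, src f1 = tgt f2 ->
    lam g = lam (comp f1 f2) ->
    exists g1 g2, src g1 = tgt g2 /\ g = comp g1 g2 /\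
                  lam g1 = lam f1 /\ lam g2 = lam f2.

Definition inverse_compatible : Prop :=
  forall f g : Mor G, lam f = lam g -> lam (inv f) = lam (inv g).

Fixpoint composable (f : Mor G) (r : list (Mor G)) : Prop :=
  match r with
  | [] => True
  | f' :: r' => src f = tgt f' /\ composable f' r'
  end.

Fixpoint chain_comp (f : Mor G) (r : list (Mor G)) : Mor G :=
  match r with
  | [] => f
  | f' :: r' => comp f (chain_comp f' r')
  end.

Definition inI1 (i : I) : Prop := exists f : Mor G, lam f = i.

Definition inI0 (i : I) : Prop := exists x : Obj G, lam (idm x) = i.

Definition rel1 (i j : I) : Prop :=
  exists (f : Mor G) (fs : list (Mor G)) (g : Mor G) (gs : list (Mor G)),
    composable f fs /\ composable g gs /\
    Forall2 (fun a b => lam a = lam b) (f :: fs) (g :: gs) /\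
    i = lam (chain_comp f fs) /\ j = lam (chain_comp g gs).

(** s1 i = s1 j: i and j have the same image in the quotient of I_1
    by ~1 (i.e. are related by the equivalence relation generated by ~1). *)
Definition same_s1 (i j : I) : Prop := clos_refl_sym_trans I rel1 i j.

(** The relation ~0 on I_0 (exactly the declared pairs). *)
Definition rel0 (a b : I) : Prop :=
  exists f g : Mor G,
    same_s1 (lam f) (lam g) /\
    a = lam (idm (src f)) /\ b = lam (idm (src g)).

Definition rel0_on_I0 (a b : {i : I | inI0 i}) : Prop :=
  rel0 (proj1_sig a) (proj1_sig b).

End Colored.
Arguments rel0_on_I0 {G I} lam a b.

(* Main.v *)
Require Import Defs.
From Stdlib Require Import Relations List.
Import ListNotations.

Section Aux.
Variables (G : Groupoid) (I : Type) (lam : Mor G -> I).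

Lemma tgt_chain : forall (fs : list (Mor G)) f, composable f fs -> tgt (chain_comp f fs) = tgt f.
Proof.
  induction fs as [|f' r IH]; intros f H; simpl in *; auto.
  destruct H as [H1 H2]. apply tgt_comp. rewrite IH; auto.
Qed.

Lemma last_cons_indep : forall (r : list (Mor G)) m x y, last (m :: r) x = last (m :: r) y.
Proof. induction r; intros; simpl; auto. apply IHr. Qed.

Lemma src_chain : forall (fs : list (Mor G)) f, composable f fs -> src (chain_comp f fs) = src (last fs f).
Proof.
  induction fs as [|f' r IH]; intros f H; simpl in *; auto.
  destruct H as [H1 H2]. rewrite src_comp.
  - rewrite (IH f' H2). destruct r; [reflexivity|]. apply f_equal, last_cons_indep.
  - rewrite tgt_chain; auto.
Qed.

Lemma forall2_last : forall (fs gs : list (Mor G)) f g,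
  Forall2 (fun a b => lam a = lam b) (f :: fs) (g :: gs) -> lam (last fs f) = lam (last gs g).
Proof.
  induction fs as [|f' r IH]; intros gs f g H; inversion H; subst.
  - inversion H5; subst. simpl; auto.
  - inversion H5; subst. specialize (IH l' f' y H5).
    change (lam (last (f' :: r) f) = lam (last (y :: l') g)).
    rewrite (last_cons_indep r f' f f'), (last_cons_indep l' y g y). simpl in IH.
    destruct r, l'; simpl in *; auto.
Qed.

Hypothesis Hinv : inverse_compatible lam.

Lemma base_rel (f g : Mor G) : lam f = lam g ->
  rel1 lam (lam (idm (src f))) (lam (idm (src g))).
Proof.
  intro E. exists (inv f), [f], (inv g), [g]. simpl.
  repeat split.
  - apply src_inv.
  - apply src_inv.
  - constructor; [ apply Hinv; auto | constructor; [auto | constructor]].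
  - rewrite inv_l; reflexivity.
  - rewrite inv_l; reflexivity.
Qed.

Lemma rel1_ids (i j : I) : rel1 lam i j ->
  exists h, lam h = j /\ forall f, lam f = i ->
    same_s1 lam (lam (idm (src f))) (lam (idm (src h))).
Proof.
  intros (f0 & fs & g0 & gs & Cf & Cg & F & Ei & Ej).
  exists (chain_comp g0 gs). split; [auto|]. intros f Ef.
  apply rst_trans with (lam (idm (src (chain_comp f0 fs)))).
  - apply rst_step, base_rel; congruence.
  - rewrite (src_chain _ _ Cf), (src_chain _ _ Cg).
    apply rst_step, base_rel. apply forall2_last; auto.
Qed.

Lemma same_ids (i j : I) : same_s1 lam i j ->
  forall f, lam f = i -> exists h, lam h = j /\
    same_s1 lam (lam (idm (src f))) (lam (idm (src h))).
Proof.
  unfold same_s1. intro H. apply clos_rst_rst1n in H.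
  induction H as [x | x y z Hxy Hyz IH]; intros f Ef.
  - exists f; split; auto. apply rst_refl.
  - destruct Hxy as [Hxy | Hyx].
    + destruct (rel1_ids _ _ Hxy) as (h & Eh & Hh).
      destruct (IH h Eh) as (h' & Eh' & Hh').
      exists h'; split; auto. eapply rst_trans; [apply Hh; auto | exact Hh'].
    + destruct Hyx as (f0 & fs & g0 & gs & Cf & Cg & F & Ei & Ej).
      assert (Hr : rel1 lam x y).
      { exists g0, gs, f0, fs. repeat split; auto.
        clear -F. revert F. generalize (f0 :: fs) (g0 :: gs). intros l1 l2 F.
        induction F; constructor; auto. }
      set (h := chain_comp f0 fs).
      assert (Eh : lam h = y) by (symmetry; exact Ei).
      destruct (rel1_ids _ _ Hr) as (k & Ek & Hk).
      destruct (IH h Eh) as (h' & Eh' & Hh').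
      exists h'; split; auto.
      eapply rst_trans; [| exact Hh'].
      apply rst_trans with (lam (idm (src (chain_comp g0 gs)))).
      * apply rst_step, base_rel; congruence.
      * rewrite (src_chain _ _ Cg). unfold h. rewrite (src_chain _ _ Cf).
        apply rst_step, base_rel. symmetry. apply forall2_last; auto.
Qed.

End Aux.

Theorem mainTheorem7 (G : Groupoid) (I : Type) (lam : Mor G -> I)
  (Hcol : morphism_colored lam) (Hinv : inverse_compatible lam) :
  equivalence {i : I | inI0 lam i} (rel0_on_I0 lam).
Proof.
  constructor.
  - intros [a [x Ex]]. unfold rel0_on_I0, rel0; simpl.
    exists (idm x), (idm x). rewrite src_id. repeat split; auto. apply rst_refl.
  - intros [a Ha] [b Hb] [c Hc]. unfold rel0_on_I0, rel0; simpl.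
    intros (f & g & S1 & Ea & Eb) (g' & h & S2 & Eb' & Ec).
    exists (idm (src f)), (idm (src h)). rewrite !src_id. repeat split; auto.
    destruct (@same_ids G I lam Hinv _ _ S1 f eq_refl) as (k1 & Ek1 & H1).
    destruct (@same_ids G I lam Hinv _ _ S2 g' eq_refl) as (k2 & Ek2 & H2).
    eapply rst_trans; [exact H1|].
    eapply rst_trans; [apply rst_step, (@base_rel G I lam Hinv k1 g Ek1)|].
    replace (lam (idm (src g))) with (lam (idm (src g'))) by congruence.
    eapply rst_trans; [exact H2|].
    apply rst_step, (@base_rel G I lam Hinv k2 h Ek2).
  - intros [a Ha] [b Hb]. unfold rel0_on_I0, rel0; simpl.
    intros (f & g & S & Ea & Eb). exists g, f. repeat split; auto. apply rst_sym; auto.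
Qed.
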